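(* Let $\alpha\in(0,1)$. For every $\varepsilon>0$ and every natural number $n_0$ there exist natural numbers $n$ and $N$ with $n_0\le n<N$, and random variables $\mathcal{A}_n,\mathcal{A}_{n+1},\dots,\mathcal{A}_N$ (defined on a common probability space) whose values are subsets of $\mathbb{B}^n,\mathbb{B}^{n+1},\dots,\mathbb{B}^N$ respectively, such that: (1) the size of $\mathcal{A}_i$ never exceeds $2^{\alpha i}$, for each $i\in\{n,\dots,N\}$; (2) for every binary string $x$ of length $N$, the probability of the event ''for some $i\in\{n,\dots,N\}$, some element of $\mathcal{A}_i$ is a substring of $x$'' exceeds $1-\varepsilon$.
   Context: $\mathbb{B}^m$ denotes the set of binary strings of length $m$. A substring of $x$ means a contiguous block $x_j x_{j+1}\dots x_{j+\ell-1}$ of consecutive symbols of $x$. *)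

(* Defs.v *)
From HB Require Import structures.
From mathcomp Require Import all_boot all_order all_algebra.
From mathcomp Require Import all_classical all_reals all_analysis.
Set Implicit Arguments. Unset Strict Implicit. Unset Printing Implicit Defensive.
Import Order.TTheory GRing.Theory Num.Theory.
Local Open Scope ring_scope.

(* Binary strings of length m: m.-tuple bool.
   "y is a substring of x" (contiguous block): seq's [infix y x]. *)
Definition substring (y x : seq bool) : bool := infix y x.

Definition is_prob (R : realType) (Omega : finType) (p : Omega -> R) : Prop :=
  (forall w, 0 <= p w) /\ \sum_(w : Omega) p w = 1.

Definition Pr (R : realType) (Omega : finType) (p : Omega -> R)
  (E : pred Omega) : R := \sum_(w : Omega | E w) p w.

(* Main.v *)
Require Import Defs.
From HB Require Import structures.
From mathcomp Require Import all_boot all_order all_algebra.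
From mathcomp Require Import all_classical all_reals all_analysis.
From mathcomp Require Import zify.
Set Implicit Arguments. Unset Strict Implicit. Unset Printing Implicit Defensive.
Import Order.TTheory GRing.Theory Num.Theory.
Local Open Scope ring_scope.

Section NatPart.
Local Open Scope nat_scope.
Lemma miss_bound (T s M : nat) : s <= T -> (T - s)^M * (T + M*s) <= T^M.+1.
Proof.
move=> hs; elim: M => [|M IH]; first by rewrite expn0 mul1n mul0n addn0 expn1.
have key : (T - s) * (T + M.+1 * s) <= T * (T + M * s).
  have -> : T = s + (T - s) by rewrite subnKC.
  rewrite addKn; nia.
rewrite (expnS _ M.+1) expnS.
move: key IH; generalize ((T - s) ^ M) (T^M.+1) (T - s) => X Y Z key IH.
have h1 : X * Z * (T + M.+1 * s) <= X * (T * (T + M * s)) by rewrite -mulnA leq_mul2l key orbT.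
nia.
Qed.
Definition block (l q L : nat) (v : L.-tuple bool) (j : 'I_q) : l.-tuple bool :=
  [tuple seq.nth false v (j * l + k) | k < l].

Lemma block_take l q L (v : L.-tuple bool) (j : 'I_q) : L = q * l ->
  tval (block l v j) = take l (drop (j * l) v).
Proof.
move=> hL; have hj := ltn_ord j.
apply: (@seq.eq_from_nth _ false).
  rewrite size_tuple size_take size_drop size_tuple.
  case: ifP => // /negbT; rewrite -leqNgt => h.
  apply/eqP; rewrite eqn_leq h /=; rewrite hL; nia.
move=> k; rewrite size_tuple => hk.
rewrite nth_take // nth_drop -(tnth_nth false (block l v j) (Ordinal hk)) tnth_mktuple. by [].
Qed.

Lemma block_infix l q L (v : L.-tuple bool) (j : 'I_q) : L = q * l ->
  infix (block l v j) v.
Proof.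
move=> hL; rewrite block_take //.
exact: infix_trans (infix_take _ _) (infix_drop _ _).
Qed.

Lemma block_inj l q L : L = q * l ->
  injective (fun v : L.-tuple bool => [ffun j : 'I_q => block l v j]).
Proof.
move=> hL v w /ffunP h.
apply: val_inj; apply: (@seq.eq_from_nth _ false); first by rewrite !size_tuple.
move=> p; rewrite size_tuple => hp.
have l0 : 0 < l by case: (posnP l) hL hp => [-> ->|]; rewrite ?muln0.

have hj : p %/ l < q by rewrite ltn_divLR // -hL.
have := h (Ordinal hj); rewrite !ffunE => /(congr1 (fun t : l.-tuple bool => tnth t (Ordinal (ltn_pmod p l0)))).
rewrite !tnth_mktuple /= -divn_eq. by [].
Qed.

Lemma card_setsT (T : finType) : #|{: {set T}}| = 2 ^ #|T|.
Proof. by have := card_powerset [set: T]; rewrite powersetT !cardsT. Qed.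

Lemma count_low (l q L s : nat) : L = q * l ->
  #|[set v : L.-tuple bool | #|[set y : l.-tuple bool | infix y v]| < s]| <= 2^(2^l) * s^q.
Proof.
move=> hL.
set T' := [set v | _].
pose phi (v : L.-tuple bool) := ([set y : l.-tuple bool | infix y v], [ffun j : 'I_q => block l v j]).
have phi_inj : injective phi.
  move=> v w [_ h]; exact: (block_inj hL h).
pose Z := [set p : {set l.-tuple bool} * {ffun 'I_q -> l.-tuple bool} |
             (#|p.1| < s) && (p.2 \in ffun_on p.1)].
have sub : phi @: T' \subset Z.
  apply/fintype.subsetP => _ /imsetP [v hv ->].
  rewrite inE /=; rewrite inE in hv; rewrite hv /=.
  apply/ffun_onP => j; rewrite ffunE inE; exact: block_infix.
rewrite -(card_imset _ phi_inj); apply: (leq_trans (subset_leq_card sub)).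
rewrite -sum1_card big_mkcond /=.
have -> : \sum_(p : {set l.-tuple bool} * {ffun 'I_q -> l.-tuple bool}) (if p \in Z then 1 else 0)
   = \sum_(F : {set l.-tuple bool}) \sum_(b : {ffun 'I_q -> l.-tuple bool}) (if (F, b) \in Z then 1 else 0).
  by rewrite pair_bigA; apply: eq_bigr => -[].
apply: (@leq_trans (\sum_(F : {set l.-tuple bool}) s ^ q)); last first.
  by rewrite sum_nat_const card_setsT card_tuple card_bool.
apply: leq_sum => F _.
case: (ltnP #|F| s) => hF; last first.
  by rewrite big1 // => b _; rewrite inE /= ltnNge hF.
apply: (@leq_trans #|ffun_on F|).
  rewrite -sum1_card [X in _ <= X]big_mkcond /=; apply: leq_sum => b _.
  by rewrite inE /= hF /=; case: (b \in ffun_on F).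
rewrite card_ffun_on card_ord; case: (posnP q) => [->|q0]; first by rewrite !expn0.
by rewrite leq_exp2r // ltnW.
Qed.

Definition emb (i : nat) (s : seq (seq bool)) : {set i.-tuple bool} :=
  [set y : i.-tuple bool | tval y \in s].

Lemma card_emb i s : #|emb i s| <= size s.
Proof.
rewrite cardE -(size_map (@tval i bool)); apply: uniq_leq_size.
  by rewrite map_inj_uniq ?enum_uniq //; exact: val_inj.
by move=> z /mapP [y]; rewrite mem_enum inE => h ->.
Qed.

Lemma emb0 i l s : (forall z, z \in s -> size z = l) -> i != l -> emb i s = finset.set0.
Proof.
move=> hs hil; apply/setP => y; rewrite !inE; apply/negP => /hs.
by rewrite size_tuple => h; rewrite h eqxx in hil.
Qed.

Lemma prefix_tuple (N l : nat) (x : N.-tuple bool) : l <= N ->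
  exists y : l.-tuple bool, infix y x.
Proof.
move=> hl.
have hs : size (take l x) == l by rewrite size_takel // size_tuple.
by exists (Tuple hs); exact: infix_take.
Qed.

End NatPart.
Section Prob.
Variable R : realType.

Lemma PrE (O : finType) (p : O -> R) (E : pred O) :
  Pr p E = \sum_(w : O) (if E w then p w else 0).
Proof. by rewrite /Pr big_mkcond. Qed.

Lemma Pr_mono (O : finType) (p : O -> R) (E1 E2 : pred O) :
  (forall w, 0 <= p w) -> (forall w, E1 w -> E2 w) -> Pr p E1 <= Pr p E2.
Proof.
move=> p0 h; rewrite !PrE; apply: ler_sum => w _.
case: ifP => [/h -> //|_]; by case: ifP.
Qed.

Lemma Pr_compl (O : finType) (p : O -> R) (E : pred O) :
  is_prob p -> Pr p E = 1 - Pr p (predC E).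
Proof.
move=> [_ s1]; rewrite -s1 /Pr (bigID E predT) /=.
by rewrite addrK.
Qed.

Definition prodp (O1 O2 : finType) (p1 : O1 -> R) (p2 : O2 -> R) (w : O1 * O2) :=
  p1 w.1 * p2 w.2.

Lemma sum_prod (O1 O2 : finType) (f : O1 -> R) (g : O2 -> R) :
  \sum_(w : O1 * O2) f w.1 * g w.2 = (\sum_w1 f w1) * (\sum_w2 g w2).
Proof.
rewrite -(pair_bigA _ (fun w1 w2 => f w1 * g w2)) /= big_distrl /=.
by apply: eq_bigr => w1 _; rewrite big_distrr.
Qed.

Lemma is_prob_prod (O1 O2 : finType) (p1 : O1 -> R) (p2 : O2 -> R) :
  is_prob p1 -> is_prob p2 -> is_prob (prodp p1 p2).
Proof.
move=> [h1 s1] [h2 s2]; split; first by move=> w; apply: mulr_ge0.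
by rewrite /prodp sum_prod s1 s2 mulr1.
Qed.

Lemma Pr_prod (O1 O2 : finType) (p1 : O1 -> R) (p2 : O2 -> R) E1 E2 :
  Pr (prodp p1 p2) (fun w => E1 w.1 && E2 w.2) = Pr p1 E1 * Pr p2 E2.
Proof.
rewrite !PrE -sum_prod; apply: eq_bigr => -[w1 w2] _ /=.
by rewrite /prodp /=; case: (E1 w1); case: (E2 w2); rewrite ?mulr0 ?mul0r.
Qed.

Lemma Pr_T (O : finType) (p : O -> R) : is_prob p -> Pr p predT = 1.
Proof. by move=> [_ s]; rewrite /Pr. Qed.

Lemma Pr_prod1 (O1 O2 : finType) (p1 : O1 -> R) (p2 : O2 -> R) E1 :
  is_prob p2 -> Pr (prodp p1 p2) (fun w => E1 w.1) = Pr p1 E1.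
Proof.
move=> h; have := Pr_prod p1 p2 E1 predT; rewrite Pr_T // mulr1 => <-.
by apply: eq_bigl => w /=; rewrite andbT.
Qed.

Lemma Pr_prod2 (O1 O2 : finType) (p1 : O1 -> R) (p2 : O2 -> R) E2 :
  is_prob p1 -> Pr (prodp p1 p2) (fun w => E2 w.2) = Pr p2 E2.
Proof.
move=> h; have := Pr_prod p1 p2 predT E2; rewrite Pr_T // mul1r => <-.
by apply: eq_bigl => w /=.
Qed.

Definition unif (O : finType) (w : O) : R := (#|O|%:R)^-1.

Lemma is_prob_unif (O : finType) : (0 < #|O|)%N -> is_prob (@unif O).
Proof.
move=> h; split; first by move=> w; rewrite /unif invr_ge0 ler0n.
rewrite /unif sumr_const -[X in X = _]mulr_natl mulfV //.
by rewrite pnatr_eq0 -lt0n.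
Qed.

Lemma Pr_unif (O : finType) (E : pred O) :
  Pr (@unif O) E = #|[set w | E w]|%:R / #|O|%:R.
Proof.
rewrite /Pr /unif sumr_const -[X in X = _]mulr_natl; congr (_ * _); congr (_%:R).
by apply: eq_card => w; rewrite inE.
Qed.

End Prob.

Section Main.
Variable R : realType.
Variables t e : nat.
Hypothesis t0 : (0 < t)%N.

Definition Qprop (r g : nat) (T : {set (2*t*g).-tuple bool}) : Prop :=
 exists N, (2*t*g + r <= N)%N /\ exists (O : finType) (p : O -> R), is_prob p /\
 exists A : forall i, O -> {set i.-tuple bool},
   (forall i w, (2*t*g <= i <= N)%N -> (#|A i w| <= 2^(i %/ t))%N) /\
   forall x : N.-tuple bool, (forall y : (2*t*g).-tuple bool, infix y x -> y \in T) ->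
     1 - ((2^e).+1%:R)^-1 <= Pr p (fun w => [exists i : 'I_N.+1,
        (2*t*g <= i)%N && [exists y in A i w, substring y x]]).

Lemma ldiv g : ((2*t*g) %/ t = 2 * g)%N.
Proof. by rewrite -mulnA mulnCA mulnC mulnK. Qed.

Lemma Q0 g (T : {set (2*t*g).-tuple bool}) : (#|T| <= 2^g)%N -> Qprop 0 T.
Proof.
move=> hT; exists (2*t*g); split; first by rewrite addn0.
exists unit, (fun _ => 1); split.
  by split => //; rewrite big_const card_unit /= addr0.
exists (fun i _ => emb i [seq tval z | z <- enum T]); split.
  move=> i w /andP [h1 h2]; have -> : i = (2*t*g)%N by apply/eqP; rewrite eqn_leq h1 h2.
  apply: leq_trans (card_emb _ _) _; rewrite size_map -cardE ldiv.
  apply: leq_trans hT _; rewrite leq_exp2l //; lia.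
move=> x hx.
have -> : Pr (fun _ : unit => (1 : R)) (fun w => [exists i : 'I_(2*t*g).+1,
        (2*t*g <= i)%N && [exists y in emb i [seq tval z | z <- enum T], substring y x]]) = 1.
  rewrite /Pr big_mkcond big_const card_unit /= addr0.
  suff -> : [exists i : 'I_(2*t*g).+1, (2*t*g <= i)%N && [exists y in emb i [seq tval z | z <- enum T], substring y x]] by [].
  apply/existsP; exists ord_max; rewrite /= leqnn /=.
  apply/existsP; exists x; rewrite inE /substring infix_refl andbT.
  by apply: map_f; rewrite mem_enum; apply: hx; exact: infix_refl.
by rewrite lerBlDr lerDl invr_ge0 ler0n.
Qed.


Lemma T'_bound r g : (e < g)%N ->
  (#|[set v : (2*t*(2^(2*t*g) * g)).-tuple bool |
      #|[set y : (2*t*g).-tuple bool | infix y v]| < 2^e * 2^(r*g)]| <= 2^(r.+1 * (2^(2*t*g) * g)))%N.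
Proof.
move=> hg; set l := (2*t*g)%N; set g' := (2^l * g)%N.
apply: leq_trans (count_low (q := 2^l) _ _) _.
  rewrite /g' /l; lia.
rewrite -expnD -expnM -expnD leq_exp2l //.
rewrite /g'; move: (2^l)%N => X.
have h1 : (1 + (e + r * g) <= r.+1 * g)%N by nia.
have := leq_mul (leqnn X) h1; nia.
Qed.

Lemma Qstep r : (forall g (T : {set (2*t*g).-tuple bool}), (e < g)%N ->
     (#|T| <= 2^(r.+1*g))%N -> Qprop r T) ->
  forall g (T : {set (2*t*g).-tuple bool}), (e < g)%N ->
     (#|T| <= 2^(r.+2*g))%N -> Qprop r.+1 T.
Proof.
move=> IH g T hg hT.
set l := (2*t*g)%N.
set g' := (2^l * g)%N.
set s := (2^e * 2^(r*g))%N.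
set T' := [set v : (2*t*g').-tuple bool | (#|[set y : l.-tuple bool | infix y v]| < s)%N].
have hT' : (#|T'| <= 2^(r.+1 * g'))%N by exact: T'_bound.
have hg' : (e < g')%N by rewrite /g'; have := expn_gt0 2 l; nia.
have [N [hN [Om [p' [hp' [A' [hA' hit']]]]]]] := IH g' T' hg' hT'.
have l1 : (1 < 2^l)%N by rewrite -{1}(expn0 2) ltn_exp2l // /l; nia.
have ll' : (l < 2*t*g')%N by rewrite /g'; move: l1; move: (2^l)%N => X hX; rewrite /l; nia.
exists N; split; first by rewrite /l; lia.
case: (posnP #|T|) => [T0 | Tpos].
  exists Om, p'; split => //.
  exists (fun i w => if (2*t*g' <= i)%N then A' i w else finset.set0); split.
    move=> i w /andP [h1 h2]; case: ifP => h; first by apply: hA'; rewrite h h2.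
    by rewrite cards0.
  move=> x hx; exfalso.
  have hlN : (l <= N)%N by rewrite /l; lia.
  have [y hy] := prefix_tuple x hlN.
  by have := hx y hy; rewrite (cards0_eq T0) inE.
pose sT := {y : l.-tuple bool | y \in T}.
pose M := (2^(2*g))%N.
pose Fs := {ffun 'I_M -> sT}.
have cardFs : #|Fs| = (#|T| ^ M)%N.
  rewrite card_ffun card_ord card_sig; congr (_ ^ _)%N; exact: eq_card.
have hunif : is_prob (@unif R Fs).
  by apply: is_prob_unif; rewrite cardFs expn_gt0 Tpos.
exists (Om * Fs)%type, (prodp p' (@unif R Fs)); split.
  exact: is_prob_prod.
exists (fun i (w : (Om * Fs)%type) => emb i [seq tval (val (w.2 j)) | j <- enum 'I_M] :|:
          (if (2*t*g' <= i)%N then A' i w.1 else finset.set0)); split.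
  move=> i w /andP [h1 h2].
  case: (eqVneq i l) => [-> | ne].
    rewrite ifF; last by apply/negbTE; rewrite -ltnNge.
    rewrite finset.setU0; apply: leq_trans (card_emb _ _) _.
    by rewrite size_map size_enum_ord /l ldiv.
  rewrite (@emb0 i l); last 2 first.
  - by move=> z /mapP [j _ ->]; rewrite size_tuple.
  - exact: ne.
  rewrite finset.set0U; case: ifP => h; first by apply: hA'; rewrite h h2.
  by rewrite cards0.
move=> x hx.
set S := [set y : l.-tuple bool | infix y x].
have hST : forall y, y \in S -> y \in T by move=> y; rewrite inE; exact: hx.
have nonneg : forall w, 0 <= prodp p' (@unif R Fs) w.
  move=> w; rewrite /prodp; apply: mulr_ge0; first by case: hp'.
  by case: hunif.
case: (leqP s #|S|) => hS.
  pose E2 := fun f : Fs => [exists j : 'I_M, val (f j) \in S].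
  have hlN1 : (l < N.+1)%N by rewrite /l; lia.
  apply: le_trans (Pr_mono (E1 := fun w => E2 w.2) nonneg _); last first.
    move=> w /existsP [j hj]; apply/existsP; exists (Ordinal hlN1); rewrite /= leqnn /=.
    apply/existsP; exists (val (w.2 j)); rewrite finset.in_setU.
    rewrite /emb inE; apply/andP; split; last by rewrite inE in hj.
    by apply/orP; left; apply/mapP; exists j; rewrite ?mem_enum.
  rewrite Pr_prod2 // Pr_compl // Pr_unif.
  apply: lerB => //.
  set Rc := [set z : sT | val z \notin S].
  have cnt : #|[set f : Fs | predC E2 f]| = (#|Rc| ^ M)%N.
    have := @card_ffun_on 'I_M _ Rc; rewrite card_ord => <-.
    apply: eq_card => f; rewrite !inE negb_exists.
    by apply/forallP/forallP => h j; have := h j; rewrite !inE.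
  have csT : #|{: sT}| = #|T| by rewrite card_sig; exact: eq_card.
  have hSc : (#|S| <= #|~: Rc|)%N.
    apply: leq_trans (leq_imset_card val (~: Rc)); apply: subset_leq_card.
    apply/fintype.subsetP => y hy; apply/imsetP; exists (exist _ y (hST y hy)) => //.
    by rewrite !inE /= negbK; rewrite inE in hy.
  have hRc : (#|Rc| <= #|T| - s)%N.
    have := cardsCs Rc; rewrite csT; lia.
  have hsT : (s <= #|T|)%N.
    apply: leq_trans hS _; apply: subset_leq_card; exact/fintype.subsetP.
  have hMs : (2^e * #|T| <= M * s)%N.
    have -> : (M * s = 2^e * 2^(r.+2 * g))%N.
      by rewrite /M /s mulnCA -expnD; congr (_ * 2 ^ _)%N; lia.
    by rewrite leq_mul2l hT orbT.
  have M0 : (0 < M)%N by rewrite expn_gt0.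
  have key : (#|Rc| ^ M * (2^e).+1 <= #|T| ^ M)%N.
    have mb := miss_bound M hsT.
    have ab : (#|Rc| ^ M <= (#|T| - s) ^ M)%N by rewrite leq_exp2r.
    rewrite expnSr in mb.
    move: mb ab hMs Tpos; move: (#|Rc| ^ M)%N ((#|T| - s) ^ M)%N (#|T| ^ M)%N (M * s)%N (2^e)%N #|T|.
    move=> a b c m E X mb ab hm X0.
    have h1 : (a * E.+1 * X <= (X - s) ^ M * (X + m))%N.
      apply: (@leq_trans ((X - s) ^ M * E.+1 * X)); first exact: leq_mul (leq_mul ab (leqnn _)) (leqnn _).
      by rewrite -mulnA mulSn leq_mul // leq_add2l.
    have h2 : (a * E.+1 * X <= X ^ M * X)%N by apply: leq_trans h1 mb.
    by rewrite leq_pmul2r in h2.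
  rewrite cnt cardFs ler_pdivrMr ?ltr0n ?expn_gt0 ?Tpos // ler_pdivlMl ?ltr0n //.
  by rewrite -natrM ler_nat mulnC.

apply: le_trans (hit' x _) _.
  move=> v hv; rewrite inE; apply: leq_ltn_trans _ hS; apply: subset_leq_card.
  by apply/fintype.subsetP => y; rewrite !inE => hy; exact: infix_trans hy hv.
rewrite -(Pr_prod1 p' _ hunif); apply: Pr_mono => // w.
case/existsP => i /andP [hi /existsP [y /andP [hy hsub]]].
apply/existsP; exists i; rewrite (leq_trans (ltnW ll') hi) /=.
by apply/existsP; exists y; rewrite hsub andbT finset.in_setU hi hy orbT.
Qed.

Lemma Qall r g (T : {set (2*t*g).-tuple bool}) : (e < g)%N ->
  (#|T| <= 2^(r.+1*g))%N -> Qprop r T.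
Proof.
elim: r g T => [|r IH] g T hg hT.
  by apply: Q0; rewrite mul1n in hT.
exact: Qstep.
Qed.

End Main.

Unset Implicit Arguments.

Theorem lemma3 (R : realType) (alpha : R) (halpha : 0 < alpha < 1) :
  forall (eps : R), 0 < eps -> forall n0 : nat,
  exists n N : nat, (n0 <= n)%N /\ (n < N)%N /\
  exists (Omega : finType) (p : Omega -> R),
    is_prob p /\
    exists A : forall i : nat, Omega -> {set i.-tuple bool},
      (forall (i : nat) (w : Omega), (n <= i <= N)%N ->
         (#|A i w|%:R <= 2 `^ (alpha * i%:R))) /\
      (forall x : N.-tuple bool,
         1 - eps < Pr p (fun w =>
           [exists i : 'I_N.+1,
              (n <= i)%N && [exists y in A i w, substring y x]])).
Proof.
move=> eps heps n0.
case/andP: halpha => a0 a1.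
pose t := (Num.truncn (alpha^-1)).+1.
have t0 : (0 < t)%N by [].
have hat : 1 <= alpha * t%:R.
  have := truncnS_gt (alpha^-1); rewrite -/t => h.
  by have := ltW h; rewrite -[alpha^-1]mulr1 ler_pdivrMl.
pose e := (Num.truncn (eps^-1)).+1.
have he : ((2^e).+1%:R^-1 < eps).
  rewrite -(@ltf_pV2 R) ?posrE ?invr_gt0 ?ltr0n // invrK.
  apply: lt_le_trans (truncnS_gt (eps^-1)) _; rewrite -/e ler_nat.
  exact: ltnW (leq_trans (ltn_expl e (isT : (1 < 2)%N)) (leqnSn _)).
pose g := maxn n0 e.+1.
have hg : (e < g)%N by rewrite leq_maxr.
pose r := (2*t).-1.
have hr : r.+1 = (2*t)%N by rewrite prednK // muln_gt0.
have hT : (#|[set: (2*t*g).-tuple bool]| <= 2^(r.+1*g))%N.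
  by rewrite cardsT card_tuple card_bool hr.
have [N [hN [Om [p [hp [A [hA hit]]]]]]] := Qall R t0 hg hT.
exists (2*t*g)%N, N; split.
  apply: leq_trans (leq_maxl n0 e.+1) _; rewrite -/g; nia.
have r1 : (0 < r)%N by rewrite -ltnS hr; lia.
split; first by lia.
exists Om, p; split => //.
exists A; split.
  move=> i w hi.
  apply: le_trans (_ : ((2 ^ (i %/ t))%N%:R <= _)).
    by rewrite ler_nat; exact: hA.
  rewrite natrX -powR_mulrn // ler_powR ?ler1n //.
  apply: (@le_trans _ _ ((i %/ t)%:R * (alpha * t%:R))).
    by rewrite ler_peMr // ler0n.
  rewrite mulrCA -natrM ler_pM2l // ler_nat; exact: leq_divM.
move=> x.
apply: lt_le_trans (hit x (fun y _ => finset.in_setT y)).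
by rewrite ltrD2l ltrN2.
Qed.
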